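(* Let $\widetilde{\mathfrak{a}}$ be an algebra which is free and finite over the DVR $\mathcal{O}$ such that $\widetilde{\mathfrak{a}}_K=K\otimes\widetilde{\mathfrak{a}}$ has a tight grading $\widetilde{\mathfrak{a}}_K=\bigoplus_{n\ge0}\widetilde{\mathfrak{a}}_{K,n}$ and $\widetilde{\mathfrak{a}}$ has a positive grading $\widetilde{\mathfrak{a}}=\bigoplus_{r\ge0}\widetilde{\mathfrak{a}}_r$ with $K\widetilde{\mathfrak{a}}_r=\widetilde{\mathfrak{a}}_{K,r}$ for each $r$. Then: (a) For each $r\in\mathbb{N}$, $\widetilde{\mathfrak{a}}_r=\widetilde{\mathfrak{a}}\cap\widetilde{\mathfrak{a}}_{K,r}$ and $\sum_{i\ge r}\widetilde{\mathfrak{a}}_i=\widetilde{\mathfrak{a}}\cap\operatorname{rad}^r\widetilde{\mathfrak{a}}_K$; and there is an isomorphism of graded $\mathcal{O}$-algebras $\widetilde{\mathfrak{a}}\to\operatorname{gr}\widetilde{\mathfrak{a}}$ sending $x\in\widetilde{\mathfrak{a}}_r$ to its image in $\widetilde{\operatorname{rad}}^r\widetilde{\mathfrak{a}}/\widetilde{\operatorname{rad}}^{r+1}\widetilde{\mathfrak{a}}=(\operatorname{gr}\widetilde{\mathfrak{a}})_r$. (b) For an $\widetilde{\mathfrak{a}}$-lattice $\widetilde{M}$, the following are equivalent: (i) $\widetilde{M}$ is tight; (ii) $\sum_{i\ge r}\widetilde{\mathfrak{a}}_i\widetilde{M}=\widetilde{\operatorname{rad}}^r\widetilde{M}$ for each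 $r\in\mathbb{N}$; (iii) the $\operatorname{gr}\widetilde{\mathfrak{a}}$-lattice $\operatorname{gr}\widetilde{M}$ is generated by $(\operatorname{gr}\widetilde{M})_0$.
   Context: $\mathcal{O}$: DVR with fraction field $K$. A tight grading of the finite-dimensional $K$-algebra $\widetilde{\mathfrak{a}}_K$ is a positive algebra grading with $\widetilde{\mathfrak{a}}_{K,0}$ semisimple and $\widetilde{\mathfrak{a}}_K$ generated as algebra by $\widetilde{\mathfrak{a}}_{K,0}+\widetilde{\mathfrak{a}}_{K,1}$ (equivalently $\widetilde{\mathfrak{a}}_K\cong\operatorname{gr}\widetilde{\mathfrak{a}}_K$ as graded algebras). The grading of $\widetilde{\mathfrak{a}}$ is a grading as $\mathcal{O}$-algebra with $\widetilde{\mathfrak{a}}\subseteq\widetilde{\mathfrak{a}}_K$. $\widetilde{\operatorname{rad}}^r\widetilde{\mathfrak{a}}=\widetilde{\mathfrak{a}}\cap(\operatorname{rad}\widetilde{\mathfrak{a}}_K)^r$, $\operatorname{gr}\widetilde{\mathfrak{a}}=\bigoplus_r\widetilde{\operatorname{rad}}^r\widetilde{\mathfrak{a}}/\widetilde{\operatorname{rad}}^{r+1}\widetilde{\mathfrak{a}}$. An $\widetilde{\mathfrak{a}}$-lattice is an $\mathcal{O}$-finite torsion-free module; $\widetilde{\operatorname{rad}}^r\widetilde{M}=\widetilde{M}\cap(\operatorname{rad}\widetilde{\mathfrak{a}}_K)^r\widetilde{M}_K$, $\operatorname{gr}\widetilde{M}=\bigoplus_r\widetilde{\operatorname{rad}}^r\widetilde{M}/\widetilde{\operatorname{rad}}^{r+1}\widetilde{M}$.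 $\widetilde{M}$ is tight if $\widetilde{\operatorname{rad}}^r\widetilde{M}=(\widetilde{\operatorname{rad}}^r\widetilde{\mathfrak{a}})\widetilde{M}$ for all $r\in\mathbb{N}$. *)

(* Defs.v *)
From HB Require Import structures.
From mathcomp Require Import all_boot all_order all_algebra all_field.
Set Implicit Arguments. Unset Strict Implicit. Unset Printing Implicit Defensive.
Import Order.TTheory GRing.Theory Num.Theory.
Local Open Scope ring_scope.

Definition is_DVR_of (K : fieldType) (O : {pred K}) : Prop :=
  [/\ 1 \in O,
      (forall x y, x \in O -> y \in O -> x - y \in O),
      (forall x y, x \in O -> y \in O -> x * y \in O) &
      exists2 pi, (pi \in O) && (pi^-1 \notin O) &
        forall x, x != 0 -> exists n : int,
          exists2 u, (u \in O) && (u^-1 \in O) & x = u * pi ^ n].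

Definition Ospan (K : fieldType) (O : {pred K}) (V : lmodType K) (b : seq V)
  : V -> Prop :=
  fun v => exists c : nat -> K, (forall i, c i \in O) /\
                                v = \sum_(i < size b) c i *: b`_i.

Definition Kspan (K : fieldType) (V : lmodType K) (S : V -> Prop) : V -> Prop :=
  fun v => exists s : seq (K * V), (forall p, p \in s -> S p.2) /\
                                   v = \sum_(p <- s) p.1 *: p.2.

Definition Osubmod (K : fieldType) (O : {pred K}) (V : lmodType K)
  (S : V -> Prop) : Prop :=
  [/\ S 0, (forall x y, S x -> S y -> S (x + y)) &
          (forall c x, c \in O -> S x -> S (c *: x))].

Definition unit_in (K : fieldType) (A : falgType K) (B : {vspace A}) (u : A)
  : Prop := exists2 z, z \in B & (z * u = 1 /\ u * z = 1).

Definition is_jacobson_radical (K : fieldType) (A : falgType K)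
  (J : {vspace A}) : Prop :=
  forall x, x \in J <-> (forall y, unit_in fullv (1 - y * x)).

Definition semisimple_subalg (K : fieldType) (A : falgType K) (B : {vspace A})
  : Prop :=
  forall x, x \in B -> (forall y, y \in B -> unit_in B (1 - y * x)) -> x = 0.

Definition is_pos_grading (K : fieldType) (A : falgType K)
  (Ak : nat -> {vspace A}) : Prop :=
  (exists N, (forall n, (N <= n)%N -> Ak n = 0%VS) /\
             (\sum_(n < N) Ak n)%VS = fullv /\
             directv (\sum_(n < N) Ak n)%VS) /\
  (forall m n, (Ak m * Ak n <= Ak (m + n)%N)%VS).

Definition is_tight_grading (K : fieldType) (A : falgType K)
  (Ak : nat -> {vspace A}) : Prop :=
  [/\ is_pos_grading Ak, semisimple_subalg (Ak 0%N) &
      agenv (Ak 0%N + Ak 1%N)%VS = fullv].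

Definition radpow (K : fieldType) (A : falgType K) (J : {vspace A}) (r : nat)
  : {vspace A} := iter r (fun U => (J * U)%VS) fullv.

Definition is_pos_grading_O (K : fieldType) (O : {pred K}) (A : falgType K)
  (a : A -> Prop) (ag : nat -> A -> Prop) : Prop :=
  [/\ forall r, Osubmod O (ag r),
      (forall r x, ag r x -> a x),
      (forall x, a x -> exists N (f : nat -> A),
           (forall i, ag i (f i)) /\ x = \sum_(i < N) f i),
      (forall N (f : nat -> A), (forall i, ag i (f i)) ->
           \sum_(i < N) f i = 0 -> forall i, (i < N)%N -> f i = 0) &
      (forall r s x y, ag r x -> ag s y -> ag (r + s)%N (x * y))].

Definition tail_sum (K : fieldType) (A : falgType K) (ag : nat -> A -> Prop)
  (r : nat) : A -> Prop :=
  fun x => exists N (f : nat -> A),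
      (forall i, ag i (f i)) /\ x = \sum_(r <= i < N) f i.

Definition radt (K : fieldType) (A : falgType K) (J : {vspace A})
  (a : A -> Prop) (r : nat) : A -> Prop :=
  fun x => a x /\ x \in radpow J r.

(* The canonical degree-preserving map a -> gr a, x in a_r |-> class of x in
   ~rad^r a / ~rad^{r+1} a, is a (well-defined) bijection in every degree.
   (It is O-linear and multiplicative by the very definition of the
   O-module and algebra structure of gr a, so this is exactly the statement
   that it is an isomorphism of graded O-algebras.) *)
Definition gr_canonical_iso (K : fieldType) (A : falgType K) (J : {vspace A})
  (a : A -> Prop) (ag : nat -> A -> Prop) : Prop :=
  [/\ (forall r x, ag r x -> radt J a r x),
      (forall r x, ag r x -> radt J a r.+1 x -> x = 0) &
      (forall r z, radt J a r z -> exists2 x, ag r x & radt J a r.+1 (z - x))].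

Definition prod_span (K : fieldType) (A : falgType K) (V : lmodType K)
  (act : A -> V -> V) (X : A -> Prop) (M : V -> Prop) : V -> Prop :=
  fun v => exists s : seq (A * V), (forall p, p \in s -> X p.1 /\ M p.2) /\
                                   v = \sum_(p <- s) act p.1 p.2.

Definition radtM (K : fieldType) (A : falgType K) (V : lmodType K)
  (act : A -> V -> V) (J : {vspace A}) (M : V -> Prop) (r : nat) : V -> Prop :=
  fun v => M v /\ prod_span act (fun x => x \in radpow J r) (fun _ => True) v.

Definition is_module_action (K : fieldType) (A : falgType K) (V : lmodType K)
  (act : A -> V -> V) : Prop :=
  [/\ (forall c x y v, act (c *: x + y) v = c *: act x v + act y v),
      (forall c x v w, act x (c *: v + w) = c *: act x v + act x w),
      (forall v, act 1 v = v) &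
      (forall x y v, act (x * y) v = act x (act y v))].

Definition tight_lattice (K : fieldType) (A : falgType K) (V : lmodType K)
  (act : A -> V -> V) (J : {vspace A}) (a : A -> Prop) (M : V -> Prop) : Prop :=
  forall r v, radtM act J M r v <-> prod_span act (radt J a r) M v.

(* gr ~M is generated, as a gr ~a-module, by (gr ~M)_0: in each degree r,
   (gr ~M)_r = (gr ~a)_r (gr ~M)_0, i.e. every z in ~rad^r M is congruent
   modulo ~rad^{r+1} M to a sum of products x m with x in ~rad^r a,
   m in M = ~rad^0 M. *)
Definition gr_generated_in_degree0 (K : fieldType) (A : falgType K)
  (V : lmodType K) (act : A -> V -> V) (J : {vspace A}) (a : A -> Prop)
  (M : V -> Prop) : Prop :=
  forall r z, radtM act J M r z ->
    exists2 w, prod_span act (radt J a r) M w & radtM act J M r.+1 (z - w).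

(* Main.v *)
Require Import Defs.
From HB Require Import structures.
From mathcomp Require Import all_boot all_order all_algebra all_field.
Import GRing.Theory.
Local Open Scope ring_scope.

Lemma Ospan0 (K : fieldType) (O : {pred K}) (V : lmodType K) (s : seq V) :
  0 \in O -> Ospan O s 0.
Proof.
move=> O0; exists (fun _ => 0); split=> //.
by rewrite big1 // => i _; rewrite scale0r.
Qed.

Lemma OspanD (K : fieldType) (O : {pred K}) (V : lmodType K) (s : seq V) x y :
  (forall x y, x \in O -> y \in O -> x + y \in O) ->
  Ospan O s x -> Ospan O s y -> Ospan O s (x + y).
Proof.
move=> OD [c [Hc ->]] [d [Hd ->]]; exists (fun i => c i + d i); split.
  by move=> i; apply: OD.
by rewrite -big_split; apply: eq_bigr => i _; rewrite scalerDl.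
Qed.

Lemma PS_ext (K : fieldType) (A : falgType K) (V : lmodType K)
  (act : A -> V -> V) (X X' : A -> Prop) (M M' : V -> Prop) v :
  (forall x, X x -> X' x) -> (forall m, M m -> M' m) ->
  prod_span act X M v -> prod_span act X' M' v.
Proof.
move=> HX HM [s [Hs ->]]; exists s; split=> // p ps.
by have [? ?] := Hs p ps; split; auto.
Qed.

Lemma PS0 (K : fieldType) (A : falgType K) (V : lmodType K)
  (act : A -> V -> V) (X : A -> Prop) (M : V -> Prop) :
  prod_span act X M 0.
Proof. by exists [::]; split=> //; rewrite big_nil. Qed.

Lemma PSD (K : fieldType) (A : falgType K) (V : lmodType K)
  (act : A -> V -> V) (X : A -> Prop) (M : V -> Prop) v w :
  prod_span act X M v -> prod_span act X M w -> prod_span act X M (v + w).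
Proof.
move=> [s [Hs ->]] [t [Ht ->]]; exists (s ++ t); split; last by rewrite big_cat.
by move=> p; rewrite mem_cat => /orP[/Hs|/Ht].
Qed.

Lemma PS_in (K : fieldType) (A : falgType K) (V : lmodType K)
  (act : A -> V -> V) (X : A -> Prop) (M : V -> Prop) v :
  M 0 -> (forall x y, M x -> M y -> M (x + y)) ->
  (forall x m, X x -> M m -> M (act x m)) ->
  prod_span act X M v -> M v.
Proof.
move=> M0 MD Mact [s [Hs ->]]; rewrite big_seq.
apply: (big_ind M) => // p ps; have [? ?] := Hs p ps; exact: Mact.
Qed.

Lemma act0 (K : fieldType) (A : falgType K) (V : lmodType K)
  (act : A -> V -> V) v : is_module_action act -> act 0 v = 0.
Proof.
case=> H1 _ _ _; have := H1 1 0 0 v; rewrite scale1r addr0 scale1r.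
by rewrite -{1}[act 0 v]addr0 => /addrI.
Qed.
Theorem proposition5p2
  (K : fieldType) (O : {pred K}) (HO : is_DVR_of O)
  (A : falgType K) (Ak : nat -> {vspace A}) (HAk : is_tight_grading Ak)
  (J : {vspace A}) (HJ : is_jacobson_radical J)
  (b : seq A) (Hb : basis_of fullv b)
  (Ha1 : Ospan O b 1)
  (HaM : forall x y, Ospan O b x -> Ospan O b y -> Ospan O b (x * y))
  (ag : nat -> A -> Prop) (Hag : is_pos_grading_O O (Ospan O b) ag)
  (HagK : forall r x, Kspan (ag r) x <-> x \in Ak r) :
  [/\ forall r x, ag r x <-> (Ospan O b x /\ x \in Ak r),
      (forall r x, tail_sum ag r x <-> (Ospan O b x /\ x \in radpow J r)),
      gr_canonical_iso J (Ospan O b) ag &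
      forall (V : vectType K) (act : A -> V -> V) (m : seq V),
        is_module_action act ->
        (<<m>>%VS = fullv) ->
        (forall x v, Ospan O b x -> Ospan O m v -> Ospan O m (act x v)) ->
        [<-> tight_lattice act J (Ospan O b) (Ospan O m);
             (forall r v, prod_span act (tail_sum ag r) (Ospan O m) v
                          <-> radtM act J (Ospan O m) r v);
             gr_generated_in_degree0 act J (Ospan O b) (Ospan O m)]].
Proof.
have [O0 OD] : 0 \in O /\ (forall x y, x \in O -> y \in O -> x + y \in O).
  case: HO => O1 OB _ _; have O0 : 0 \in O by rewrite -(subrr 1) OB.
  split=> // x y Hx Hy; have := OB x (0 - y) Hx (OB 0 y O0 Hy).
  by rewrite sub0r opprK.
case: HAk => [[[N [HN [Hsum Hdir]]] HM] Hss Hgen].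
have Akz : forall n x, (N <= n)%N -> x \in Ak n -> x = 0.
  by move=> n x nN; rewrite HN // memv0 => /eqP.
pose G r := (\sum_(i < N | (r <= i)%N) Ak i)%VS.
have AkG : forall n r x, (r <= n)%N -> x \in Ak n -> x \in G r.
  move=> n r x rn xn; case: (ltnP n N) => nN; last by rewrite (Akz n x) ?mem0v.
  exact: (subvP (@sumv_sup _ _ _ (Ordinal nN) (fun i : 'I_N => (r <= i)%N) _ _ rn (subvv _))).
have Gmono : forall r s, (r <= s)%N -> (G s <= G r)%VS.
  move=> r s rs; apply/subv_sumP => i si.
  exact: (@sumv_sup _ _ _ i (fun i : 'I_N => (r <= i)%N) _ _ (leq_trans rs si) (subvv _)).
have G0 : G 0%N = fullv by rewrite /G -Hsum; apply: eq_bigl.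
have GN : forall r, (N <= r)%N -> G r = 0%VS.
  move=> r Nr; rewrite /G big_pred0 // => i; apply/negbTE.
  by rewrite -ltnNge (leq_trans (ltn_ord i)).
have GM : forall r s x y, x \in G r -> y \in G s -> x * y \in G (r + s)%N.
  move=> r s x y /memv_sumP[u Hu ->] /memv_sumP[v Hv ->].
  rewrite mulr_suml; apply: rpred_sum => i ri; rewrite mulr_sumr.
  apply: rpred_sum => j sj; apply: (AkG (i + j)%N); first by rewrite leq_add.
  exact: (subvP (HM i j)) _ (memv_mul (Hu i ri) (Hv j sj)).
have capG : forall n x, x \in Ak n -> x \in G n.+1 -> x = 0.
  move=> n x xn xG; case: (ltnP n N) => nN; last exact: (Akz n).
  move/directv_sumP: Hdir => /(_ (Ordinal nN) isT) Hc.
  apply/eqP; rewrite -memv0 -Hc memv_cap xn /=.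
  apply: (subvP _ _ xG); apply/subv_sumP => j nj; apply: (sumv_sup j) => //.
  by apply/eqP => jn; move: nj; rewrite jn /= ltnn.
have Npos : (0 < N)%N.
  rewrite lt0n; apply/eqP => N0; move: Hsum; rewrite N0 big_ord0 => H0.
  by have := memvf (1 : A); rewrite -H0 memv0 oner_eq0.
have Gsplit : forall x, exists x0, exists x1, [/\ x0 \in Ak 0%N, x1 \in G 1%N & x = x0 + x1].
  move=> x; have : x \in G 0%N by rewrite G0 memvf.
  move=> /memv_sumP[vs Hvs ->]; rewrite (bigD1 (Ordinal Npos)) //=.
  exists (vs (Ordinal Npos)); exists (\sum_(i < N | (0 <= i)%N && (i != Ordinal Npos)) vs i).
  split=> //; first exact: Hvs.
  apply: rpred_sum => j /andP[_ j0]; apply: (AkG j) => //; last exact: Hvs.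
  by rewrite lt0n; apply: contra j0 => /eqP j0'; apply/eqP/val_inj.
have one0 : (1 : A) \in Ak 0%N.
  have [e0 [e1 [e0A e1G de]]] := Gsplit 1.
  suff e1z : e1 = 0 by move: e0A; rewrite de e1z addr0.
  have hom : forall n y, y \in Ak n -> e1 * y = 0.
    move=> n y yn; apply: (capG n).
      have -> : e1 * y = y - e0 * y.
        by rewrite -{2}[y]mul1r de mulrDl [e0 * y + _]addrC addrK.
      apply: memvB => //; have := (subvP (HM 0%N n)) _ (memv_mul e0A yn).
      by rewrite add0n.
    exact: (GM 1%N n) e1G (AkG n n y (leqnn n) yn).
  have : (1 : A) \in G 0%N by rewrite G0 memvf.
  move=> /memv_sumP[vs Hvs E]; rewrite -[e1]mulr1 E mulr_sumr big1 // => i _.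
  exact: (hom i) (Hvs i isT).
have G1J : forall x, x \in G 1%N -> x \in J.
  move=> x xG; apply/HJ => y.
  have zG : y * x \in G 1%N by apply: (GM 0%N 1%N); rewrite ?G0 ?memvf.
  set z := y * x.
  have zpow : forall k, z ^+ k \in G k.
    elim=> [|k IH]; first by rewrite expr0 G0 memvf.
    by rewrite exprS; apply: (GM 1%N k).
  have zN : z ^+ N = 0 by apply/eqP; rewrite -memv0 -(GN N (leqnn N)) zpow.
  have Sr : forall n, (\sum_(i < n) z ^+ i) * (1 - z) = 1 - z ^+ n.
    elim=> [|n IH]; first by rewrite big_ord0 mul0r expr0 subrr.
    rewrite big_ord_recr /= mulrDl IH mulrBr mulr1 -exprSr.
    by rewrite addrA subrK.
  exists (\sum_(i < N) z ^+ i); first exact: memvf.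
  split; first by rewrite Sr zN subr0.
  by rewrite -opprB mulNr -subrX1 zN sub0r opprK.
have mul0 : forall a0 a1 b0 b1, a0 \in Ak 0%N -> a1 \in G 1%N -> b0 \in Ak 0%N ->
    b1 \in G 1%N -> (a0 + a1) * (b0 + b1) = 1 -> a0 * b0 = 1.
  move=> a0 a1 b0 b1 a0A a1G b0A b1G E.
  have tG : a0 * b1 + a1 * (b0 + b1) \in G 1%N.
    apply: memvD; first exact: (GM 0%N 1%N) (AkG 0%N 0%N _ (leqnn 0) a0A) b1G.
    apply: (GM 1%N 0%N) => //; by rewrite G0 memvf.
  have a0b0 : a0 * b0 \in Ak 0%N by exact: (subvP (HM 0%N 0%N)) _ (memv_mul a0A b0A).
  have : 1 - a0 * b0 = 0.
    apply: (capG 0%N); first exact: memvB.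
    have eq : (a0 + a1) * (b0 + b1) = a0 * b0 + (a0 * b1 + a1 * (b0 + b1)).
      by rewrite mulrDl [a0 * _]mulrDr addrA.
    rewrite -E eq [a0 * b0 + _]addrC addrK.
    exact: tG.
  by move/eqP; rewrite subr_eq0 => /eqP.
have JG1 : forall x, x \in J -> x \in G 1%N.
  move=> x /HJ xJ; have [x0 [x1 [x0A x1G xE]]] := Gsplit x.
  suff x00 : x0 = 0 by rewrite xE x00 add0r.
  apply: Hss => // y yA; have [z _ [zl zr]] := xJ y.
  have [z0 [z1 [z0A z1G zE]]] := Gsplit z.
  have uE : 1 - y * x = (1 - y * x0) + - (y * x1) by rewrite xE mulrDr opprD addrA.
  have u0A : 1 - y * x0 \in Ak 0%N.
    by apply: memvB => //; exact: (subvP (HM 0%N 0%N)) _ (memv_mul yA x0A).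
  have u1G : - (y * x1) \in G 1%N.
    by rewrite memvN; apply: (GM 0%N 1%N) => //; apply: (AkG 0%N).
  exists z0 => //; split.
    by apply: (mul0 _ z1 _ (- (y * x1))) => //; rewrite -zE -uE.
  by apply: (mul0 _ (- (y * x1)) _ z1) => //; rewrite -zE -uE.
pose R r := radpow J r.
have RS : forall r, R r.+1 = (J * R r)%VS by [].
have RG : forall r, (R r <= G r)%VS.
  elim=> [|r IH]; first by rewrite G0 subvv.
  rewrite RS; apply/prodvP => u v uJ vR.
  exact: (GM 1%N r) (JG1 u uJ) ((subvP IH) v vR).
have RA : forall r, (fullv * R r <= R r)%VS.
  case=> [|r]; first exact: subvf.
  rewrite RS prodvA; apply: prodvSl; apply/prodvP => u v _ vJ.
  by apply: G1J; apply: (GM 0%N 1%N); [rewrite G0 memvf | exact: JG1].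
have Rmono : forall r, (R r.+1 <= R r)%VS.
  elim=> [|r IH]; first exact: subvf.
  by rewrite RS [R r.+1]RS; apply: prodvSr.
have Rmono' : forall r s, (r <= s)%N -> (R s <= R r)%VS.
  move=> r s /subnK <-; elim: (s - r)%N => [|d IH]; first exact: subvv.
  exact: subv_trans (Rmono _) IH.
pose W := (\sum_(i < N) (Ak i :&: R i))%VS.
have inW : forall n x, x \in Ak n -> x \in R n -> x \in W.
  move=> n x xn xR; case: (ltnP n N) => nN; last by rewrite (Akz n x) ?mem0v.
  apply: (subvP (@sumv_sup _ _ _ (Ordinal nN) xpredT _ _ isT (subvv _))).
  by rewrite memv_cap xn.
have fullW : (fullv <= W)%VS.
  rewrite -Hgen; apply: agenv_sub_modl.
    by rewrite -memvE; apply: (inW 0%N) => //; exact: memvf.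
  apply/prodvP => u w /memv_addP[u0 u0A [u1 u1A ->]] /memv_sumP[ws Hws ->].
  rewrite mulrDl !mulr_sumr; apply: memvD; apply: rpred_sum => i _;
    have /memv_capP[wiA wiR] := Hws i isT.
    apply: (inW i); last exact: (subvP (RA i)) _ (memv_mul (memvf u0) wiR).
    by have := (subvP (HM 0%N i)) _ (memv_mul u0A wiA); rewrite add0n.
  apply: (inW i.+1); first exact: (subvP (HM 1%N i)) _ (memv_mul u1A wiA).
  by rewrite RS; apply: memv_mul => //; apply: G1J; apply: (AkG 1%N).
have AkR : forall n x, x \in Ak n -> x \in R n.
  move=> n x xn; case: (ltnP n N) => nN; last by rewrite (Akz n x) ?mem0v.
  have /memv_sumP[ws Hws xE] := subvP fullW x (memvf x).
  pose i0 := Ordinal nN.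
  pose us := fun i : 'I_N => ws i - (if i == i0 then x else 0).
  have H1 : forall i : 'I_N, true -> us i \in Ak i.
    move=> i _; have /memv_capP[wiA _] := Hws i isT; apply: memvB => //.
    by case: eqP => [->|_]; rewrite ?mem0v.
  have H2 : \sum_(i < N | true) us i = 0.
    by rewrite sumrB -big_mkcond big_pred1_eq -xE subrr.
  move/directv_sum_independent: Hdir => /(_ us H1 H2 i0 isT).
  by move/eqP; rewrite /us eqxx subr_eq0 => /eqP <-; have /memv_capP[] := Hws i0 isT.
have RGE : forall r, R r = G r.
  move=> r; apply/eqP; rewrite eqEsubv RG /=; apply/subv_sumP => i ri.
  by apply/subvP => x xi; apply: (subvP (Rmono' r i ri)); exact: AkR.
have RGE' : forall r, radpow J r = G r := RGE.
have Akz' : forall f : nat -> A, (forall i, f i \in Ak i) -> forall i, (N <= i)%N -> f i = 0.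
  by move=> f gf i Ni; apply: (Akz i).
have pad : forall (f : nat -> A) B L, (forall i, (B <= i)%N -> f i = 0) -> (B <= L)%N ->
    \sum_(i < L) f i = \sum_(i < B) f i.
  move=> f B L fB BL; rewrite -!(big_mkord xpredT f) (big_cat_nat (leq0n B) BL) /=.
  by rewrite [X in _ + X]big_nat_cond [X in _ + X]big1 ?addr0 // => i /andP[/andP[Bi _] _]; exact: fB.
have padG : forall (f : nat -> A) B, (forall i, f i \in Ak i) ->
    (forall i, (B <= i)%N -> f i = 0) -> \sum_(i < B) f i = \sum_(i < N) f i.
  move=> f B gf fB; rewrite -(pad f B (maxn B N)) ?leq_maxl //.
  by rewrite (pad f N (maxn B N)) ?leq_maxr //; apply: Akz'.
have Uniq : forall h : nat -> A, (forall i, h i \in Ak i) ->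
    \sum_(i < N) h i = 0 -> forall i, h i = 0.
  move=> h gh s0 i; case: (ltnP i N) => iN; last exact: Akz' h gh i iN.
  by move/directv_sum_independent: Hdir => /(_ (fun j : 'I_N => h j) (fun j _ => gh j) s0 (Ordinal iN) isT).
have CE : forall (f g : nat -> A) B1 B2, (forall i, f i \in Ak i) -> (forall i, g i \in Ak i) ->
   (forall i, (B1 <= i)%N -> f i = 0) -> (forall i, (B2 <= i)%N -> g i = 0) ->
   \sum_(i < B1) f i = \sum_(i < B2) g i -> forall i, f i = g i.
  move=> f g B1 B2 gf gg f0 g0 E i; apply/eqP; rewrite -subr_eq0; apply/eqP.
  apply: (Uniq (fun i => f i - g i)) => [j|]; first exact: memvB.
  by rewrite sumrB -(padG f B1) // -(padG g B2) // E subrr.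
have tailE : forall (f : nat -> A) r B,
    \sum_(r <= i < B) f i = \sum_(i < B) (if (r <= i)%N then f i else 0).
  by move=> f r B; rewrite big_geq_mkord big_mkcond.
have memG : forall r x, x \in G r -> exists g : nat -> A,
    [/\ forall i, g i \in Ak i, forall i, (i < r)%N -> g i = 0 & x = \sum_(i < N) g i].
  move=> r x /memv_sumP[vs Hvs ->].
  exists (fun i => if (r <= i)%N then oapp vs 0 (insub i : option 'I_N) else 0); split.
  - move=> i; case: ifP => ri; last exact: mem0v.
    by case: insubP => [j _ ji|_]; [rewrite -ji in ri *; exact: Hvs | exact: mem0v].
  - by move=> i ir; rewrite leqNgt ir.
  - by rewrite big_mkcond; apply: eq_bigr => i _; rewrite valK.
case: Hag => Hsub Hin Hdec Hind Hmul.
have agA : forall r x, ag r x -> x \in Ak r.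
  move=> r x H; apply/HagK; exists [:: (1, x)]; split; last by rewrite big_seq1 scale1r.
  by move=> p; rewrite inE => /eqP ->.
have ag0 : forall r, ag r 0 by move=> r; case: (Hsub r).
have aDec : forall x, Ospan O b x -> exists B, exists f : nat -> A,
    [/\ forall i, ag i (f i), forall i, (B <= i)%N -> f i = 0 & x = \sum_(i < B) f i].
  move=> x /Hdec[B [f [Hf ->]]]; exists B, (fun i => if (i < B)%N then f i else 0); split.
  - by move=> i; case: ifP => _; [exact: Hf | exact: ag0].
  - by move=> i Bi; rewrite ltnNge Bi.
  - by apply: eq_bigr => i _; rewrite ltn_ord.
have a1 : forall r x, ag r x <-> (Ospan O b x /\ x \in Ak r).
  move=> r x; split => [H | [ax xr]]; first by split; [exact: Hin H | exact: agA].
  have [B [f [fa f0 xE]]] := aDec x ax.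
  pose g := fun i => if i == r then x else 0.
  have gg : forall i, g i \in Ak i.
    by move=> i; rewrite /g; case: eqP => [->|]; rewrite ?mem0v.
  have g0 : forall i, (r.+1 <= i)%N -> g i = 0.
    by move=> i ri; rewrite /g (gtn_eqF ri).
  have gs : \sum_(i < B) f i = \sum_(i < r.+1) g i.
    rewrite -xE big_ord_recr /= /g eqxx big1 ?add0r // => i _.
    by rewrite (ltn_eqF (ltn_ord i)).
  have := CE f g B r.+1 (fun i => agA _ _ (fa i)) gg f0 g0 gs r.
  by rewrite /g eqxx => <-.
have a2 : forall r x, tail_sum ag r x <-> (Ospan O b x /\ x \in radpow J r).
  move=> r x; split.
    move=> [B [f [fa ->]]]; split.
      rewrite big_geq_mkord; apply: (big_ind (Ospan O b)).
      - exact: Ospan0.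
      - by move=> ? ?; apply: OspanD.
      - by move=> i _; apply: Hin (fa i).
    rewrite RGE' tailE; apply: rpred_sum => i _; case: ifP => ri; last exact: mem0v.
    by apply: (AkG i) => //; exact: agA.
  move=> [ax]; rewrite RGE' => /memG[g [gg g0 xE']].
  have [B [f [fa f0 xE]]] := aDec x ax.
  have fg := CE f g B N (fun i => agA _ _ (fa i)) gg f0 (Akz' g gg) (etrans (esym xE) xE').
  exists B, f; split => //; rewrite xE tailE; apply: eq_bigr => i _.
  by case: ifP => // ri; rewrite fg g0 // ltnNge ri.
have a3 : gr_canonical_iso J (Ospan O b) ag.
  split.
  - move=> r x H; split; first exact: Hin H.
    by rewrite RGE'; apply: (AkG r) => //; exact: agA.
  - by move=> r x H [_ xR]; apply: (capG r); [exact: agA | rewrite -RGE'].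
  - move=> r z [az zR]; have [B [f [fa ->]]] := (a2 r z).2 (conj az zR).
    case: (ltnP r B) => rB.
      exists (f r) => //; rewrite big_ltn // [f r + _]addrC addrK.
      by apply/(a2 r.+1 _).1; exists B, f.
    exists 0; first exact: ag0.
    rewrite big_geq // subr0; apply/(a2 r.+1 0).1; exists B, f.
    by rewrite big_geq // leqW.
split => // V act m Hact Hm Hcl.
have RN : forall r x, (N <= r)%N -> x \in radpow J r -> x = 0.
  by move=> r x Nr; rewrite RGE' GN // memv0 => /eqP.
have mO0 : Ospan O m 0 := @Ospan0 _ O _ m O0.
have mD : forall x y, Ospan O m x -> Ospan O m y -> Ospan O m (x + y).
  by move=> x y; apply: OspanD.
tfae.
- move=> Ht r v; split => H.
    by apply/Ht; apply: PS_ext H => // x /(a2 r x).1.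
  by apply: PS_ext ((Ht r v).1 H) => // x /(a2 r x).2.
- move=> H1 r z Hz; exists z.
    by apply: PS_ext ((H1 r z).2 Hz) => // x /(a2 r x).1.
  by rewrite subrr; split; [exact: mO0 | exact: PS0].
- move=> H2.
  have key : forall d r z, (N <= r + d)%N -> radtM act J (Ospan O m) r z ->
      prod_span act (radt J (Ospan O b) r) (Ospan O m) z.
    elim=> [|d IH] r z.
      rewrite addn0 => Nr [_ [s [Hs ->]]]; rewrite big1_seq; first exact: PS0.
      move=> p /andP[_ ps]; have [px _] := Hs p ps.
      by rewrite (RN r _ Nr px) act0.
    move=> Nrd Hz; have [w Hw Hzw] := H2 r z Hz.
    have Nrd2 : (N <= r.+1 + d)%N by rewrite addSnnS.
    have H := IH r.+1 (z - w) Nrd2 Hzw.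
    rewrite -(subrK w z); apply: PSD => //; apply: PS_ext H => // x [ax xR].
    by split => //; exact: (subvP (Rmono r)) _ xR.
  move=> r v; split => H; first by apply: (key N r v) => //; exact: leq_addl.
  split; last by apply: PS_ext H => // x [].
  apply: PS_in H => //; by move=> x v' [ax _] mv; apply: Hcl.
Qed.
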